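(* Let $M>0$, $0<a<M$, $\mu>0$, $m\in\mathbb{Z}\setminus\{0\}$, $n\in\{0,1,2,\dots\}$, $l\in\{|m|,|m|+1,\dots\}$, and define $$\alpha_1=\frac{ma}{\mu M^2},\quad \alpha_2=\frac{2n+1}{\mu M}\sqrt{1-\frac{a^2}{M^2}},\quad \alpha=\alpha_1-i\alpha_2,\quad \epsilon=2\sqrt{1-\frac{a^2}{M^2}},\quad \beta=6-\frac{l(l+1)}{\mu^2M^2}.$$ Assume $\beta\geq 0$ and define $$q(z)=z^4+\frac{4z}{\beta+\epsilon}\left[(2+\epsilon)(z^2+1)+\alpha(z^2-1)\right]+2\,\frac{16-\beta+3\epsilon}{\beta+\epsilon}\,z^2+1,\quad z\in\mathbb{C},$$ and $h_1,h_2:\mathbb{R}\to\mathbb{R}$ by $h_1(y)=\mathrm{Re}(q(iy))$, $h_2(y)=\mathrm{Im}(q(iy))$. If $\alpha_1>2+\epsilon$ or $\alpha_1<-(2+\epsilon)$, then $q$ has no purely imaginary roots (roots of the form $iy$, $y\in\mathbb{R}$). Moreover: (i) if $\alpha_1>2+\epsilon$, then $h_2$ is strictly decreasing and $h_2((0,\infty))\subset(-\infty,0)$; (ii) if $\alpha_1<-(2+\epsilon)$, then $h_2$ is strictly increasing and $h_2((0,\infty))\subset(0,\infty)$; (iii) if $0<\beta<8+\epsilon$, then $h_1$ has precisely $2$ positive roots $\bar y_0,\bar y_1$ with $0<\bar y_0<\bar y_1$, and $h_1(y)>0$ for $0\leq y<\bar y_0$, $h_1(y)<0$ for $\bar y_0<y<\bar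 y_1$, and $h_1(y)>0$ for $y>\bar y_1$. *)

(* Defs.v *)
From Stdlib Require Import Reals ZArith.
From Coquelicot Require Import Coquelicot.

Open Scope R_scope.

Definition alpha1 (M a mu : R) (m : Z) : R := IZR m * a / (mu * M ^ 2).
Definition alpha2 (M a mu : R) (n : nat) : R :=
  (2 * INR n + 1) / (mu * M) * sqrt (1 - a ^ 2 / M ^ 2).
Definition alphaC (M a mu : R) (m : Z) (n : nat) : C :=
  (RtoC (alpha1 M a mu m) - Ci * RtoC (alpha2 M a mu n))%C.
Definition eps (M a : R) : R := 2 * sqrt (1 - a ^ 2 / M ^ 2).
Definition betaP (M mu : R) (l : nat) : R :=
  6 - INR l * (INR l + 1) / (mu ^ 2 * M ^ 2).

Definition qpoly (M a mu : R) (m : Z) (n l : nat) (z : C) : C :=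
  let e := eps M a in
  let b := betaP M mu l in
  let al := alphaC M a mu m n in
  (z ^ 4
   + RtoC 4 * z / RtoC (b + e)
       * (RtoC (2 + e) * (z ^ 2 + 1) + al * (z ^ 2 - 1))
   + RtoC 2 * RtoC ((16 - b + 3 * e) / (b + e)) * z ^ 2 + 1)%C.

Definition h1 (M a mu : R) (m : Z) (n l : nat) (y : R) : R :=
  Re (qpoly M a mu m n l (Ci * RtoC y)%C).
Definition h2 (M a mu : R) (m : Z) (n l : nat) (y : R) : R :=
  Im (qpoly M a mu m n l (Ci * RtoC y)%C).

(* Main.v *)
Require Import Defs.
From Stdlib Require Import Reals ZArith Lra Psatz.
From Coquelicot Require Import Coquelicot.
Open Scope R_scope.

Lemma L (e b A1 A2 y : R) (hs : b + e <> 0) :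
 let z := (Ci * RtoC y)%C in
 let al := (RtoC A1 - Ci * RtoC A2)%C in
 let q := (z ^ 4
   + RtoC 4 * z / RtoC (b + e)
       * (RtoC (2 + e) * (z ^ 2 + 1) + al * (z ^ 2 - 1))
   + RtoC 2 * RtoC ((16 - b + 3 * e) / (b + e)) * z ^ 2 + 1)%C in
 Re q = y^4 - 4*A2/(b+e) * y^3 - 2*(16-b+3*e)/(b+e) * y^2 - 4*A2/(b+e)*y + 1
 /\ Im q = 4/(b+e) * ((2+e-A1)*y - (2+e+A1)*y^3).
Proof.
  simpl. unfold Cminus, Cdiv, Cinv, Cplus, Cmult, Copp, RtoC, Ci; simpl.
  split; field; auto.
Qed.

Lemma mono (c1 c3 x y : R) : c1 < 0 -> 0 < c3 -> x < y ->
  c1*y - c3*y^3 < c1*x - c3*x^3.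
Proof.
  intros h1 h3 hxy.
  assert (H : c3*y^3 - c3*x^3 = c3*(y-x)*(x*x+x*y+y*y)) by ring.
  assert (0 <= x*x+x*y+y*y) by nra.
  assert (0 <= c3*(y-x)*(x*x+x*y+y*y)).
  { apply Rmult_le_pos; [apply Rmult_le_pos|]; lra. }
  nra.
Qed.

Theorem mainTheorem9 (M a mu : R) (m : Z) (n l : nat)
  (hM : 0 < M) (ha0 : 0 < a) (haM : a < M) (hmu : 0 < mu)
  (hm : m <> 0%Z) (hl : (Z.abs_nat m <= l)%nat)
  (hbeta : 0 <= betaP M mu l) :
  let e := eps M a in
  let b := betaP M mu l in
  let A1 := alpha1 M a mu m in
  ((A1 > 2 + e \/ A1 < - (2 + e)) ->
     forall y : R, qpoly M a mu m n l (Ci * RtoC y)%C <> 0%C)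
  /\ (A1 > 2 + e ->
       (forall x y : R, x < y -> h2 M a mu m n l y < h2 M a mu m n l x)
       /\ (forall y : R, 0 < y -> h2 M a mu m n l y < 0))
  /\ (A1 < - (2 + e) ->
       (forall x y : R, x < y -> h2 M a mu m n l x < h2 M a mu m n l y)
       /\ (forall y : R, 0 < y -> 0 < h2 M a mu m n l y))
  /\ (0 < b < 8 + e ->
       exists y0 y1 : R,
         0 < y0 < y1
         /\ h1 M a mu m n l y0 = 0 /\ h1 M a mu m n l y1 = 0
         /\ (forall y : R, 0 < y -> h1 M a mu m n l y = 0 -> y = y0 \/ y = y1)
         /\ (forall y : R, 0 <= y < y0 -> 0 < h1 M a mu m n l y)
         /\ (forall y : R, y0 < y < y1 -> h1 M a mu m n l y < 0)
         /\ (forall y : R, y1 < y -> 0 < h1 M a mu m n l y)).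
Proof.
  intros e b A1.
  set (A2 := alpha2 M a mu n).
  assert (he : 0 < e).
  { unfold e, eps. apply Rmult_lt_0_compat; [lra|]. apply sqrt_lt_R0.
    assert (a^2/M^2 < 1).
    { apply (Rmult_lt_reg_r (M^2)); [nra|]. field_simplify; nra. }
    lra. }
  assert (hA2 : 0 <= A2).
  { unfold A2, alpha2. apply Rmult_le_pos; [|apply sqrt_pos].
    unfold Rdiv. apply Rmult_le_pos.
    - pose proof (pos_INR n); lra.
    - left; apply Rinv_0_lt_compat; nra. }
  assert (hs : 0 < b + e) by (unfold b; lra).
  assert (HQ : forall y, Re (qpoly M a mu m n l (Ci * RtoC y)%C) =
     y^4 - 4*A2/(b+e) * y^3 - 2*(16-b+3*e)/(b+e) * y^2 - 4*A2/(b+e)*y + 1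
     /\ Im (qpoly M a mu m n l (Ci * RtoC y)%C) =
     4/(b+e) * ((2+e-A1)*y - (2+e+A1)*y^3)).
  { intro y. unfold qpoly, alphaC. apply L. lra. }
  assert (H1 : forall y, h1 M a mu m n l y =
     y^4 - 4*A2/(b+e) * y^3 - 2*(16-b+3*e)/(b+e) * y^2 - 4*A2/(b+e)*y + 1)
    by (intro y; apply HQ).
  assert (H2 : forall y, h2 M a mu m n l y =
     4/(b+e) * ((2+e-A1)*y - (2+e+A1)*y^3)) by (intro y; apply HQ).
  clearbody A2 e b A1.
  assert (hk : 0 < 4/(b+e)) by (apply Rdiv_lt_0_compat; lra).
  split; [|split; [|split]].
  - intros hA y hq.
    destruct (HQ y) as [hr hi]. rewrite hq in hr, hi. cbn [Re Im fst snd RtoC] in hr, hi.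
    destruct (Req_dec y 0) as [->|hy].
    + rewrite hr in *. lra.
    + assert (E : (2+e-A1)*y - (2+e+A1)*y^3 = y * ((2+e-A1) - (2+e+A1)*(y*y))) by ring.
      rewrite E in hi.
      assert (y*y > 0) by nra.
      assert ((2+e-A1) - (2+e+A1)*(y*y) <> 0) by (destruct hA; nra).
      assert (y * ((2+e-A1) - (2+e+A1)*(y*y)) <> 0) by (apply Rmult_integral_contrapositive; auto).
      assert (4/(b+e) * (y * ((2+e-A1) - (2+e+A1)*(y*y))) <> 0)
        by (apply Rmult_integral_contrapositive; split; lra).
      lra.
  - intro hA. split.
    + intros x y hxy. rewrite !H2. apply Rmult_lt_compat_l; auto.
      apply mono; lra.
    + intros y hy. rewrite H2.
      pose proof (mono (2+e-A1) (2+e+A1) 0 y ltac:(lra) ltac:(lra) hy).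
      assert (((2 + e - A1) * y - (2 + e + A1) * y ^ 3) < 0) by (simpl in *; lra).
      nra.
  - intro hA. split.
    + intros x y hxy. rewrite !H2.
      pose proof (mono (-(2+e-A1)) (-(2+e+A1)) x y ltac:(lra) ltac:(lra) hxy).
      apply Rmult_lt_compat_l; auto. lra.
    + intros y hy. rewrite H2.
      pose proof (mono (-(2+e-A1)) (-(2+e+A1)) 0 y ltac:(lra) ltac:(lra) hy).
      assert (0 < ((2 + e - A1) * y - (2 + e + A1) * y ^ 3)) by (simpl in *; lra).
      nra.
  - intros [hb0 hb8].
    set (p := 4*A2/(b+e)). set (r := 2*(16-b+3*e)/(b+e)).
    assert (hp : 0 <= p) by (unfold p; apply Rdiv_le_0_compat; lra).
    assert (hr : 0 < 2 + r).
    { assert (0 < r) by (unfold r; apply Rdiv_lt_0_compat; lra). lra. }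
    assert (hrp : 2 < r + 2*p).
    { assert (E : r + 2*p - 2 = (32 - 4*b + 4*e + 8*A2)/(b+e))
        by (unfold r, p; field; lra).
      assert (0 < (32 - 4*b + 4*e + 8*A2)/(b+e)) by (apply Rdiv_lt_0_compat; lra).
      lra. }
    set (D := p^2 + 4*(2+r)).
    assert (hD : 0 <= D) by (unfold D; nra).
    set (t := (p + sqrt D)/2).
    set (t' := p - t).
    assert (hsD := sqrt_sqrt D hD).
    assert (hsD0 := sqrt_pos D).
    assert (htt : t * t' = -(2+r)).
    { unfold t', t.
      replace ((p + sqrt D) / 2 * (p - (p + sqrt D) / 2)) with ((p*p - sqrt D * sqrt D)/4) by field.
      rewrite hsD. unfold D. field. }
    assert (ht2 : 2 < t).
    { unfold t. destruct (Rle_lt_dec (4 - p) 0); [|].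
      - assert (0 < sqrt D). { apply sqrt_lt_R0. unfold D; nra. } lra.
      - assert (4 - p < sqrt D).
        { apply Rsqr_incrst_0; unfold Rsqr; [|lra|lra]. rewrite hsD. unfold D. nra. }
        lra. }
    assert (ht' : t' < 0) by nra.
    set (E2 := t*t - 4).
    assert (hE2 : 0 < E2) by (unfold E2; nra).
    assert (hsE := sqrt_sqrt E2 (Rlt_le _ _ hE2)).
    assert (hsE0 := sqrt_lt_R0 E2 hE2).
    exists ((t - sqrt E2)/2), ((t + sqrt E2)/2).
    assert (hsEt : sqrt E2 < t).
    { apply Rsqr_incrst_0; unfold Rsqr; [|lra|lra]. rewrite hsE. unfold E2. lra. }
    assert (FAC : forall y, h1 M a mu m n l y =
       (y - (t - sqrt E2)/2) * (y - (t + sqrt E2)/2) * (y*y - t'*y + 1)).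
    { intro y. rewrite H1.
      assert (Hp : p = t + t') by (unfold t'; ring).
      assert (Hr : r = - t*t' - 2) by lra.
      assert (E3 : 4 * A2 / (b + e) = p) by reflexivity.
      assert (E4 : 2 * (16 - b + 3 * e) / (b + e) = r) by reflexivity.
      rewrite E3, E4, Hr, Hp.
      replace ((y - (t - sqrt E2) / 2) * (y - (t + sqrt E2) / 2))
        with (y*y - t*y + (t*t - sqrt E2 * sqrt E2)/4) by field.
      rewrite hsE. unfold E2. field. }
    assert (HQp : forall y, 0 <= y -> 0 < y*y - t'*y + 1) by (intros; nra).
    split; [lra|]. split; [rewrite FAC; ring|]. split; [rewrite FAC; ring|].
    split; [|split; [|split]].
    + intros y hy h0. rewrite FAC in h0.
      pose proof (HQp y ltac:(lra)).
      apply Rmult_integral in h0. destruct h0 as [h0|h0]; [|lra].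
      apply Rmult_integral in h0. destruct h0; [left|right]; lra.
    + intros y hy. rewrite FAC. pose proof (HQp y ltac:(lra)).
      apply Rmult_lt_0_compat; auto. nra.
    + intros y hy. rewrite FAC. pose proof (HQp y ltac:(lra)).
      assert ((y - (t - sqrt E2) / 2) * (y - (t + sqrt E2) / 2) < 0) by nra. nra.
    + intros y hy. rewrite FAC. pose proof (HQp y ltac:(lra)).
      apply Rmult_lt_0_compat; auto. nra.
Qed.
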